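(* Fix positive integers $\ell,m$. Let $F\subset\mathbb{R}[x]$ be an infinite set of polynomials. Suppose each $f\in F$ is a sum of $\ell$ squares of polynomials each having at most $m$ monomial terms, and that all nonzero coefficients of all $f\in F$ belong to a fixed finite set $C\subset\mathbb{R}$. Then there exist infinitely many distinct $f_1,f_2,\ldots\in F$, matrices $P_1,P_2,\ldots\in\mathbb{N}^{\ell\times m}$, and a single family of real numbers $(\bar a_{ij})$ such that for all $k$, $$f_k=S_{P_k}(x)\big|_{a_{ij}=\bar a_{ij}}.$$
   Context: For $P=(p_{ij})\in\mathbb{N}^{\ell\times m}$ and indeterminates $a_{ij}$, define $$S_P(x):=\sum_{i=1}^\ell\Big(\sum_{j=1}^m a_{ij}x^{p_{ij}}\Big)^2\in\mathbb{N}[a_{ij}][x].$$ The exponent matrices may be taken ordered so that $p_{11}\ge p_{21}\ge\cdots\ge p_{\ell1}$ and $p_{ij}>p_{i(j+1)}$. *)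

(* Defs.v *)
From Stdlib Require Import Reals List.
Open Scope R_scope.

(* A real polynomial, as its coefficient sequence: rpoly p n = coeff of x^n. *)
Definition rpoly := nat -> R.

Definition monom (a : R) (e : nat) : rpoly :=
  fun n => if Nat.eq_dec n e then a else 0.

Fixpoint psum (n : nat) (g : nat -> rpoly) : rpoly :=
  match n with
  | O => fun _ => 0
  | S n' => fun k => psum n' g k + g n' k
  end.

Definition pmul (p q : rpoly) : rpoly :=
  fun n => sum_f_R0 (fun k => p k * q (n - k)%nat) n.

(* S_P(x) with the indeterminates a_ij specialised to the reals a i j:
   sum_{i<l} ( sum_{j<m} a_ij x^{p_ij} )^2.
   Matrices in N^{l x m} / R^{l x m} are functions nat -> nat -> _ of which
   only the entries i < l, j < m are used. *)
Definition S_P (l m : nat) (P : nat -> nat -> nat) (a : nat -> nat -> R) : rpoly :=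
  psum l (fun i =>
    let q := psum m (fun j => monom (a i j) (P i j)) in pmul q q).

Definition infinite_set (F : rpoly -> Prop) : Prop :=
  ~ (exists L : list rpoly, forall f, F f -> In f L).

(* Main.v *)
Require Import Defs.
From Stdlib Require Import Reals List Arith Lia Classical ClassicalEpsilon FunctionalExtensionality.
Open Scope R_scope.

Fixpoint lsum {X} (g : X -> R) (L : list X) : R :=
  match L with nil => 0 | x :: L' => g x + lsum g L' end.

Lemma lsum_app {X} (g : X -> R) L1 L2 : lsum g (L1 ++ L2) = lsum g L1 + lsum g L2.
Proof. induction L1; simpl; [ring|rewrite IHL1; ring]. Qed.

Lemma lsum_ext {X} (g h : X -> R) L : (forall x, In x L -> g x = h x) -> lsum g L = lsum h L.
Proof. induction L; simpl; intros H; auto. rewrite H, IHL; auto. Qed.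

Lemma lsum_zero {X} (g : X -> R) L : (forall x, In x L -> g x = 0) -> lsum g L = 0.
Proof. induction L; simpl; intros H; auto. rewrite H, IHL; auto. ring. Qed.

Lemma lsum_map {X Y} (g : Y -> R) (f : X -> Y) L : lsum g (map f L) = lsum (fun x => g (f x)) L.
Proof. induction L; simpl; auto. rewrite IHL; auto. Qed.

Lemma lsum_flat_map {X Y} (g : Y -> R) (f : X -> list Y) L :
  lsum g (flat_map f L) = lsum (fun x => lsum g (f x)) L.
Proof. induction L; simpl; auto. rewrite lsum_app, IHL; auto. Qed.

Lemma lsum_mult_l {X} (g : X -> R) c L : c * lsum g L = lsum (fun x => c * g x) L.
Proof. induction L; simpl; [ring|rewrite <- IHL; ring]. Qed.

Lemma lsum_mult_r {X} (g : X -> R) c L : lsum g L * c = lsum (fun x => g x * c) L.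
Proof. induction L; simpl; [ring|rewrite <- IHL; ring]. Qed.

Lemma lsum_plus {X} (g h : X -> R) L : lsum g L + lsum h L = lsum (fun x => g x + h x) L.
Proof. induction L; simpl; [ring|rewrite <- IHL; ring]. Qed.

Lemma psum_lsum n g k : psum n g k = lsum (fun i => g i k) (seq 0 n).
Proof.
  induction n; cbn [psum]; auto.
  rewrite seq_S, lsum_app, IHn. simpl. ring.
Qed.

Lemma psum_lsum_f n g : psum n g = fun k => lsum (fun i => g i k) (seq 0 n).
Proof. apply functional_extensionality; intro k; apply psum_lsum. Qed.

Lemma sum_lsum {X} n (L : list X) (g : nat -> X -> R) :
  sum_f_R0 (fun k => lsum (g k) L) n = lsum (fun x => sum_f_R0 (fun k => g k x) n) L.
Proof.
  induction n; simpl; auto.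
  rewrite IHn, lsum_plus. reflexivity.
Qed.

Lemma spike n p (c : nat -> R) :
  sum_f_R0 (fun k => if Nat.eq_dec k p then c k else 0) n = if le_dec p n then c p else 0.
Proof.
  induction n; cbn [sum_f_R0].
  - destruct (Nat.eq_dec 0 p); destruct (le_dec p 0); subst; auto; try lia.
  - rewrite IHn. destruct (Nat.eq_dec (S n) p); destruct (le_dec p n); destruct (le_dec p (S n));
      subst; try lia; try ring.
Qed.

Lemma pmul_coef (L : list nat) (p : nat -> nat) (c : nat -> R) n :
  pmul (fun k => lsum (fun j => monom (c j) (p j) k) L) (fun k => lsum (fun j => monom (c j) (p j) k) L) n
  = lsum (fun j => lsum (fun j' => if Nat.eq_dec (p j + p j')%nat n then c j * c j' else 0) L) L.
Proof.
  unfold pmul.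
  transitivity (sum_f_R0 (fun k => lsum (fun j => lsum (fun j' =>
     if Nat.eq_dec k (p j) then c j * monom (c j') (p j') (n-k)%nat else 0) L) L) n).
  { apply sum_eq; intros k _. rewrite lsum_mult_r. apply lsum_ext; intros j _.
    rewrite lsum_mult_l. apply lsum_ext; intros j' _. unfold monom.
    destruct (Nat.eq_dec k (p j)); destruct (Nat.eq_dec (n - k)%nat (p j')); ring. }
  rewrite sum_lsum. apply lsum_ext; intros j _.
  rewrite sum_lsum. apply lsum_ext; intros j' _.
  pose proof (spike n (p j) (fun k => c j * monom (c j') (p j') (n-k)%nat)) as Hs.
  cbv beta in Hs. rewrite Hs. unfold monom.
  destruct (le_dec (p j) n); destruct (Nat.eq_dec (p j + p j')%nat n);
    try destruct (Nat.eq_dec (n - p j)%nat (p j')); try lia; ring.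
Qed.

Definition tsum (P : nat -> nat -> nat) (t : nat * nat * nat) : nat :=
  match t with (i, j, j') => (P i j + P i j')%nat end.
Definition tprod (a : nat -> nat -> R) (t : nat * nat * nat) : R :=
  match t with (i, j, j') => a i j * a i j' end.
Definition triples l m : list (nat * nat * nat) :=
  flat_map (fun i => flat_map (fun j => map (fun j' => (i, j, j')) (seq 0 m)) (seq 0 m)) (seq 0 l).

Lemma SP_coef l m P a n :
  S_P l m P a n = lsum (fun t => if Nat.eq_dec (tsum P t) n then tprod a t else 0) (triples l m).
Proof.
  unfold S_P, triples. rewrite psum_lsum, lsum_flat_map. apply lsum_ext; intros i _.
  cbv beta zeta. rewrite psum_lsum_f. rewrite (pmul_coef (seq 0 m) (P i) (a i)).
  rewrite lsum_flat_map. apply lsum_ext; intros j _.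
  rewrite lsum_map. apply lsum_ext; intros j' _. reflexivity.
Qed.

Lemma map_eq_In {A B} (g h : A -> B) L x : map g L = map h L -> In x L -> g x = h x.
Proof.
  induction L; simpl; intros H Hi; [contradiction|].
  injection H as H1 H2. destruct Hi; subst; auto.
Qed.

Definition sE l m P :=
  map (fun pr => Nat.eqb (tsum P (fst pr)) (tsum P (snd pr))) (list_prod (triples l m) (triples l m)).
Definition sV l m P (f : rpoly) := map (fun t => f (tsum P t)) (triples l m).
Definition Qc l m (x : list bool * list R) (f : rpoly) :=
  exists P a, f = S_P l m P a /\ (sE l m P, sV l m P f) = x.

Lemma transfer l m P a P0 a0 f f0 :
  f = S_P l m P a -> f0 = S_P l m P0 a0 ->
  sE l m P = sE l m P0 -> sV l m P f = sV l m P0 f0 -> f = S_P l m P a0.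
Proof.
  intros Hf Hf0 HE HV. apply functional_extensionality; intro n.
  destruct (classic (exists t, In t (triples l m) /\ tsum P t = n)) as [[t [Ht Htn]]|Hno].
  - rewrite SP_coef.
    transitivity (lsum (fun t' => if Nat.eq_dec (tsum P0 t') (tsum P0 t) then tprod a0 t' else 0) (triples l m)).
    2: { apply lsum_ext; intros t' Ht'.
         pose proof (map_eq_In _ _ _ _ HE (in_prod _ _ _ _ Ht' Ht)) as E. cbn [fst snd] in E.
         revert E.
         destruct (Nat.eqb_spec (tsum P t') (tsum P t)); destruct (Nat.eqb_spec (tsum P0 t') (tsum P0 t));
           intro E; try discriminate E;
           destruct (Nat.eq_dec (tsum P0 t') (tsum P0 t)); destruct (Nat.eq_dec (tsum P t') n);
           try reflexivity; exfalso; congruence. }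
    rewrite <- SP_coef, <- Hf0.
    pose proof (map_eq_In _ _ _ _ HV Ht) as E. cbv beta in E. rewrite <- E, Htn. reflexivity.
  - rewrite Hf, !SP_coef. rewrite !lsum_zero; auto; intros t' Ht';
      destruct (Nat.eq_dec (tsum P t') n); auto; exfalso; apply Hno; eauto.
Qed.

Fixpoint allseqs {A} (N : nat) (D : list A) : list (list A) :=
  match N with
  | O => nil :: nil
  | S N' => flat_map (fun s => map (fun d => d :: s) D) (allseqs N' D)
  end.

Lemma allseqs_in {A} (D : list A) s : forall N,
  length s = N -> (forall x, In x s -> In x D) -> In s (allseqs N D).
Proof.
  induction s as [|x s IH]; intros N HN HD; simpl in HN; subst; simpl.
  - left; auto.
  - apply in_flat_map. exists s. split.
    + apply IH; auto. intros y Hy; apply HD; right; auto.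
    + apply (in_map (fun d => d :: s)). apply HD; left; auto.
Qed.

Lemma pigeon {X} (A : list X) (Q : X -> rpoly -> Prop) : forall F,
  infinite_set F -> (forall f, F f -> exists x, In x A /\ Q x f) ->
  exists x, infinite_set (fun f => F f /\ Q x f).
Proof.
  induction A as [|y A IH]; intros F HF Hc.
  - exfalso. apply HF. exists nil. intros f Hf. destruct (Hc f Hf) as [x [[] _]].
  - destruct (classic (infinite_set (fun f => F f /\ Q y f))) as [Hy|Hy]; [exists y; exact Hy|].
    unfold infinite_set in Hy. apply NNPP in Hy. destruct Hy as [L1 HL1].
    destruct (IH (fun f => F f /\ ~ Q y f)) as [x Hx].
    + intros [L2 HL2]. apply HF. exists (L1 ++ L2). intros f Hf. apply in_or_app.
      destruct (classic (Q y f)); [left; apply HL1; auto | right; apply HL2; auto].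
    + intros f [Hf Hnq]. destruct (Hc f Hf) as [x [[<-|Hx] Hq]]; [contradiction | eauto].
    + exists x. intros [L HL]. apply Hx. exists L. intros f [[Hf _] Hq]. apply HL; auto.
Qed.

Lemma infinite_seq (G : rpoly -> Prop) : infinite_set G ->
  exists fs : nat -> rpoly, (forall k, G (fs k)) /\ (forall k k', fs k = fs k' -> k = k').
Proof.
  intros HG.
  assert (Hn : forall L : list rpoly, exists f, G f /\ ~ In f L).
  { intros L. apply NNPP; intro Hc. apply HG. exists L. intros f Hf.
    apply NNPP; intro Hnot. apply Hc; eauto. }
  set (next := fun L => proj1_sig (constructive_indefinite_description _ (Hn L))).
  assert (Hnext : forall L, G (next L) /\ ~ In (next L) L)
    by (intro L; exact (proj2_sig (constructive_indefinite_description _ (Hn L)))).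
  set (build := nat_rect (fun _ => list rpoly) nil (fun _ L => next L :: L)).
  assert (Hin : forall k j, (j < k)%nat -> In (next (build j)) (build k)).
  { induction k; intros j Hj; [lia|].
    change (build (S k)) with (next (build k) :: build k).
    destruct (Nat.eq_dec j k); [subst; left; auto | right; apply IHk; lia]. }
  exists (fun k => next (build k)). split.
  - intro k; apply Hnext.
  - intros k k' E. destruct (lt_eq_lt_dec k k') as [[Hlt|Heq]|Hgt]; auto; exfalso.
    + apply (proj2 (Hnext (build k'))). rewrite <- E. apply Hin; auto.
    + apply (proj2 (Hnext (build k))). rewrite E. apply Hin; auto.
Qed.

Theorem lemma4p2 (l m : nat) (Hl : (0 < l)%nat) (Hm : (0 < m)%nat)
  (F : rpoly -> Prop) (C : list R)
  (HFinf : infinite_set F)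
  (HFsos : forall f, F f ->
     exists (P : nat -> nat -> nat) (a : nat -> nat -> R), f = S_P l m P a)
  (HFcoef : forall f n, F f -> f n <> 0 -> In (f n) C) :
  exists (fs : nat -> rpoly) (Ps : nat -> nat -> nat -> nat) (abar : nat -> nat -> R),
    (forall k, F (fs k)) /\
    (forall k k', fs k = fs k' -> k = k') /\
    (forall k, fs k = S_P l m (Ps k) abar).
Proof.
  set (A := list_prod (allseqs (length (list_prod (triples l m) (triples l m))) (true :: false :: nil))
                      (allseqs (length (triples l m)) (0 :: C))).
  assert (Hcov : forall f, F f -> exists x, In x A /\ Qc l m x f).
  { intros f Hf. destruct (HFsos f Hf) as [P [a Ha]].
    exists (sE l m P, sV l m P f). split.
    - apply in_prod; apply allseqs_in.
      + unfold sE; apply length_map.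
      + intros b _; destruct b; simpl; auto.
      + unfold sV; apply length_map.
      + intros r Hr. unfold sV in Hr. apply in_map_iff in Hr. destruct Hr as [t [<- _]].
        destruct (Req_dec (f (tsum P t)) 0) as [E|E]; [left; auto | right; apply HFcoef; auto].
    - exists P, a; auto. }
  destruct (pigeon A (Qc l m) F HFinf Hcov) as [x Hx].
  destruct (infinite_seq _ Hx) as [fs [HG Hinj]].
  destruct (HG 0%nat) as [_ [P0 [a0 [Hf0 Hx0]]]].
  assert (Hrep : forall k, exists P, fs k = S_P l m P a0).
  { intro k. destruct (HG k) as [_ [P [a [Hf Hxk]]]]. exists P.
    rewrite <- Hx0 in Hxk. injection Hxk as E1 E2. eapply transfer; eauto. }
  exists fs, (fun k => proj1_sig (constructive_indefinite_description _ (Hrep k))), a0.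
  split; [intro k; apply (HG k)|]. split; [exact Hinj|].
  intro k. exact (proj2_sig (constructive_indefinite_description _ (Hrep k))).
Qed.
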